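(* Let $\mathbb D$ be any nonempty set of database instances over the same schema. Then there exists a probabilistic database $\mathcal D\in\mathsf{FO}(\mathsf{TI})$ with $\mathrm{worlds}(\mathcal D)=\mathbb D$.
   Context: Fix a countably infinite universe $U$. A database schema is a finite nonempty set of relation symbols with arities; facts are $R(u_1,\dots,u_{\mathrm{ar}(R)})$ with $u_i\in U$; an instance is a finite set of facts; $\mathrm{adom}(D)$ is the set of elements of $U$ occurring in $D$. A probabilistic database (PDB) is a discrete probability space $(\mathbb D,P)$ with $\mathbb D$ a nonempty countable set of instances; $\mathrm{worlds}(\mathcal D)$ is the set of instances $D$ with $P(\{D\})>0$. A PDB $\mathcal I$ is tuple-independent if for all pairwise distinct facts $f_1,\dots,f_k$, $\Pr(f_1\in I,\dots,f_k\in I)=\prod_i\Pr(f_i\in I)$. An FO-view consists of one first-order formula $\Phi_R(x_1,\dots,x_{\mathrm{ar}(R)})$ per output relation symbol $R$, evaluated under active domain semantics (quantifiers range over $\mathrm{adom}(D)$ and the formula's constants), mapping $D$ to the instance containing $R(\bar a)$ for all $\bar a$ over $\mathrm{adom}(D)\cup\mathrm{adom}(\Phi_R)$ with $D\models\Phi_R[\bar a]$. The image of a PDB $(\mathbb D,P)$ under a view $V$ is the PDB on $V(\mathbb D)$ with $P'(\{D'\})=P(\{D:V(D)=D'\})$. $\mathsf{FO}(\mathsf{TI})$ is the class of images of tuple-independent PDBs under FO-views. *)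

(* Defs.v *)
From HB Require Import structures.
From mathcomp Require Import all_boot all_order all_algebra finmap.
From mathcomp Require Import boolp classical_sets functions cardinality reals ereal esum.
From mathcomp Require Import Rstruct.

Set Implicit Arguments.
Unset Strict Implicit.
Unset Printing Implicit Defensive.

Import Order.TTheory GRing.Theory Num.Theory.

Definition U := nat.

Record schema := Schema {
  sym : finType;
  ar : sym -> nat;
  sym_nonempty : (0 < #|sym|)%N }.

Definition fact (s : schema) : Type := {R : sym s & (ar R).-tuple U}.
HB.instance Definition _ (s : schema) := Choice.on (fact s).

Definition inst (s : schema) : Type := {fset fact s}.
HB.instance Definition _ (s : schema) := Choice.on (inst s).

Definition adom (s : schema) (D : inst s) : set U :=
  [set u | exists2 f : fact s, f \in D & u \in (tagged f : seq U)].

Inductive term := TVar of nat | TCst of U.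

Inductive formula (s : schema) :=
| FTrue
| FFalse
| FRel (R : sym s) of (ar R).-tuple term
| FEq of term & term
| FNot of formula s
| FAnd of formula s & formula s
| FOr of formula s & formula s
| FImp of formula s & formula s
| FExists of nat & formula s
| FForall of nat & formula s.

Definition term_csts (t : term) : seq U :=
  if t is TCst c then [:: c] else [::].

Definition term_vars (t : term) : seq nat :=
  if t is TVar x then [:: x] else [::].

Fixpoint fcsts (s : schema) (phi : formula s) : seq U :=
  match phi with
  | FTrue | FFalse => [::]
  | FRel _ ts => flatten (map term_csts ts)
  | FEq t1 t2 => term_csts t1 ++ term_csts t2
  | FNot p => fcsts p
  | FAnd p q | FOr p q | FImp p q => fcsts p ++ fcsts q
  | FExists _ p | FForall _ p => fcsts p
  end.

Fixpoint ffree (s : schema) (phi : formula s) : seq nat :=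
  match phi with
  | FTrue | FFalse => [::]
  | FRel _ ts => flatten (map term_vars ts)
  | FEq t1 t2 => term_vars t1 ++ term_vars t2
  | FNot p => ffree p
  | FAnd p q | FOr p q | FImp p q => ffree p ++ ffree q
  | FExists x p | FForall x p => seq.filter (fun y => y != x) (ffree p)
  end.

Definition teval (nu : nat -> U) (t : term) : U :=
  match t with TVar x => nu x | TCst c => c end.

Definition upd (nu : nat -> U) (x : nat) (u : U) : nat -> U :=
  fun y => if y == x then u else nu y.

Fixpoint sat (s : schema) (D : inst s) (dom : set U) (nu : nat -> U)
    (phi : formula s) : Prop :=
  match phi with
  | FTrue => True
  | FFalse => False
  | FRel R ts => (Tagged (fun R => (ar R).-tuple U) (map_tuple (teval nu) ts)
                  : fact s) \in D
  | FEq t1 t2 => teval nu t1 = teval nu t2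
  | FNot p => ~ sat D dom nu p
  | FAnd p q => sat D dom nu p /\ sat D dom nu q
  | FOr p q => sat D dom nu p \/ sat D dom nu q
  | FImp p q => sat D dom nu p -> sat D dom nu q
  | FExists x p => exists2 u, dom u & sat D dom (upd nu x u) p
  | FForall x p => forall u, dom u -> sat D dom (upd nu x u) p
  end.

(* Active-domain semantics: quantifiers range over adom(D) u adom(Phi). *)
Definition adom_dom (s : schema) (D : inst s) (phi : formula s) : set U :=
  adom D `|` [set u | u \in fcsts phi].

(* Assignment x_i |-> a_i  (the free variables x_1..x_k are 0..k-1). *)
Definition tuple_asg (k : nat) (a : k.-tuple U) : nat -> U :=
  fun i => nth 0%N (a : seq U) i.

Definition models (s : schema) (D : inst s) (phi : formula s) (k : nat)
    (a : k.-tuple U) : Prop :=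
  sat D (adom_dom D phi) (tuple_asg a) phi.

Record view (s t : schema) := View {
  vformula : sym t -> formula s;
  vfree : forall R : sym t, all (fun x => (x < ar R)%N) (ffree (vformula R)) }.

Definition view_eval (s t : schema) (V : view s t) (D : inst s) (D' : inst t)
  : Prop :=
  forall f : fact t,
    f \in D' <->
    ((forall u, u \in (tagged f : seq U) -> adom_dom D (vformula V (tag f)) u)
     /\ models D (vformula V (tag f)) (tagged f)).

Local Open Scope ring_scope.
Local Open Scope classical_set_scope.

Record pdb (s : schema) := PDB {
  space : set (inst s);
  mass : inst s -> Rdefinitions.R;
  space_nonempty : space !=set0;
  mass_ge0 : forall D, 0 <= mass D;
  mass_out : forall D, ~ space D -> mass D = 0;
  mass_sum : (\esum_(D in space) (mass D)%:E = 1)%E }.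

Definition Prob (s : schema) (P : pdb s) (A : set (inst s)) : \bar Rdefinitions.R :=
  \esum_(D in A `&` space P) (mass P D)%:E.

Definition worlds (s : schema) (P : pdb s) : set (inst s) :=
  [set D | (0 < Prob P [set D])%E].

Definition tuple_independent (s : schema) (P : pdb s) : Prop :=
  forall fs : seq (fact s), uniq fs ->
    Prob P [set I | forall f, f \in fs -> f \in I]
    = (\prod_(f <- fs) Prob P [set I | f \in I])%E.

Definition is_image (s t : schema) (P : pdb s) (V : view s t) (Q : pdb t)
  : Prop :=
  space Q = [set D' | exists2 D, space P D & view_eval V D D'] /\
  forall D', Prob Q [set D'] = Prob P [set D | view_eval V D D'].

Definition in_FO_TI (t : schema) (Q : pdb t) : Prop :=
  exists (s : schema) (P : pdb s) (V : view s t),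
    tuple_independent P /\ is_image P V Q.

(* Main.v *)
Require Import Defs.
From HB Require Import structures.
From mathcomp Require Import all_boot all_order all_algebra finmap.
From mathcomp Require Import boolp classical_sets functions cardinality reals ereal esum fsbigop.
From mathcomp Require Import Rstruct.
Import Order.TTheory GRing.Theory Num.Theory.
Local Open Scope ring_scope.
Local Open Scope classical_set_scope.
Set Implicit Arguments.
Unset Strict Implicit.
Unset Printing Implicit Defensive.

Notation RR := Rdefinitions.R.

Lemma fsumZ (T : choiceType) (X : set T) (c : RR) (f : T -> \bar RR) :
  finite_set X -> (forall x, X x -> (0 <= f x)%E) ->
  (\sum_(i \in X) (c%:E * f i) = c%:E * \sum_(i \in X) f i)%E.
Proof.
move=> finX f0; rewrite !fsbig_finite //.
transitivity (\sum_(i <- fset_set X | i \in fset_set X) (c%:E * f i))%E.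
  exact: big_seq.
transitivity (c%:E * \sum_(i <- fset_set X | i \in fset_set X) f i)%E; last first.
  by congr (_ * _)%E; apply: esym; exact: big_seq.
by rewrite ge0_sume_distrr // => i; rewrite in_fset_set // inE => /f0.
Qed.

Lemma esumZl (T : choiceType) (S : set T) (c : RR) (f : T -> \bar RR) :
  0 <= c -> (forall x, S x -> (0 <= f x)%E) ->
  (\esum_(x in S) (c%:E * f x) = c%:E * \esum_(x in S) f x)%E.
Proof.
move=> c0 f0; rewrite /esum -ereal_supZl //; last first.
  by apply/set0P; exists 0%E; exists set0; [exact: fsets_set0|rewrite fsbig_set0].
congr ereal_sup; apply/seteqP; split => x /=.
  move=> [X [finX XS] <-]; exists (\sum_(i \in X) f i)%R; first by exists X.
  by rewrite fsumZ // => i /XS /f0.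
move=> [y [X [finX XS] <-] <-]; exists X => //.
by rewrite fsumZ // => i /XS /f0.
Qed.

Section TIcons.
Variable s : schema.
Variable r : fact s -> RR.
Hypothesis r_ge0 : forall f, 0 <= r f.

Definition w (I : inst s) : RR := \prod_(f <- I) r f.

Lemma w_ge0 I : 0 <= w I.
Proof. by rewrite /w; apply: prodr_ge0 => f _. Qed.

Lemma w_U1 a I : a \notin I -> w (a |` I)%fset = r a * w I.
Proof. by move=> aI; rewrite /w big_fsetU1. Qed.

Lemma w_fset0 : w fset0 = 1.
Proof. by rewrite /w big_seq_fset0. Qed.

Definition wE (I : inst s) : \bar RR := (w I)%:E.

Lemma wE_ge0 I : (0 <= wE I)%E.
Proof. by rewrite lee_fin w_ge0. Qed.

Lemma esum_split (S : set (inst s)) a :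
  (forall I, a \notin I -> (S I <-> S (a |` I)%fset)) ->
  (\esum_(I in S `&` [set I | a \in I]) wE I =
   (r a)%:E * \esum_(I in S `&` [set I | a \notin I]) wE I)%E.
Proof.
move=> Ssym; rewrite -esumZl //; last by move=> *; exact: wE_ge0.
have -> : S `&` [set I | a \in I] =
    (fun I => a |` I)%fset @` (S `&` [set I | a \notin I]).
  apply/seteqP; split => I /=.
    move=> [SI aI]; exists (I `\ a)%fset; last by rewrite fsetD1K.
    have aD : a \notin (I `\ a)%fset by rewrite !inE eqxx.
    by split => //; apply/(Ssym _ aD); rewrite fsetD1K.
  by move=> [J [SJ aJ] <-]; split; [exact/(Ssym _ aJ)|exact: fset1U1].
rewrite esum_image; last first.
  by move=> I J; rewrite !inE => -[_ /= aI] [_ /= aJ] /(congr1 (fun K => K `\ a)%fset); rewrite !fsetU1K.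
by apply: eq_esum => I [_ /= aI]; rewrite /wE w_U1 // EFinM.
Qed.

Lemma esum_splitID (S : set (inst s)) a :
  (\esum_(I in S) wE I = \esum_(I in S `&` [set I | a \in I]) wE I +
     \esum_(I in S `&` [set I | a \notin I]) wE I)%E.
Proof.
rewrite (esumID [set I : inst s | a \in I]); last by move=> *; exact: wE_ge0.
congr (_ + _)%E; congr esum; apply/seteqP; split => I /= [SI H]; split => //.
  by apply/negP.
by move/negP: H.
Qed.

Definition Gs (fs : seq (fact s)) := [set I : inst s | forall f, f \in fs -> f \in I].

Lemma Gs_cons a fs : a \notin fs ->
  (\esum_(I in Gs (a :: fs)) wE I = (r a / (1 + r a))%:E * \esum_(I in Gs fs) wE I)%E.
Proof.
move=> afs.
have Hsym : forall I, a \notin I -> (Gs fs I <-> Gs fs (a |` I)%fset).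
  move=> I aI; split => H f ffs; first by apply: fset1Ur; apply: H.
  have := H f ffs; rewrite in_fset1U => /orP[/eqP fa|//].
  by move: afs; rewrite -fa ffs.
have -> : Gs (a :: fs) = Gs fs `&` [set I | a \in I].
  apply/seteqP; split => I /=.
    by move=> H; split; [move=> f ff; apply: H; rewrite inE ff orbT|apply: H; rewrite inE eqxx].
  by move=> [H aI] f; rewrite inE => /orP[/eqP ->|/H].
rewrite (esum_splitID (Gs fs) a) esum_split //.
set X := esum _ _.
have X0 : (0 <= X)%E by apply: esum_ge0 => *; exact: wE_ge0.
have ra0 : 0 < 1 + r a by rewrite ltr_pwDl.
have E : ((r a)%:E * X + X = (r a + 1)%:E * X)%E.
  by rewrite EFinD ge0_muleDl ?lee_fin ?mul1e.
rewrite E muleA -EFinM; congr (_ * _)%E; congr EFin; rewrite addrC divfK //.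
by rewrite addrC gt_eqF.
Qed.

Lemma Gs_prod fs : uniq fs ->
  (\esum_(I in Gs fs) wE I = (\prod_(f <- fs) (r f / (1 + r f)))%:E * \esum_(I in setT) wE I)%E.
Proof.
elim: fs => [|a fs IH] /=.
  move=> _; rewrite big_nil mul1e; congr esum; apply/seteqP; split => I //.
move=> /andP[afs ufs]; rewrite Gs_cons // IH // big_cons muleA -EFinM //.
Qed.

Definition Ws (bs : seq (fact s)) := [set I : inst s | forall f, f \in I -> f \in bs].

Lemma Ws_nil : (\esum_(I in Ws [::]) wE I = 1)%E.
Proof.
have -> : Ws [::] = [set fset0].
  apply/seteqP; split => I /=; last by move=> ->.
  by move=> H; apply/fsetP => f; rewrite inE; apply/negP => /H.
by rewrite esum_set1 ?wE_ge0 // /wE w_fset0.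
Qed.

Lemma Ws_cons a bs : a \notin bs ->
  (\esum_(I in Ws (a :: bs)) wE I = (1 + r a)%:E * \esum_(I in Ws bs) wE I)%E.
Proof.
move=> abs.
have Hsym : forall I, a \notin I -> (Ws (a :: bs) I <-> Ws (a :: bs) (a |` I)%fset).
  move=> I aI; split => H f.
    by rewrite in_fset1U => /orP[/eqP ->|/H //]; rewrite inE eqxx.
  by move=> fI; apply: H; apply: fset1Ur.
rewrite (esum_splitID _ a) esum_split //.
have -> : Ws (a :: bs) `&` [set I | a \notin I] = Ws bs.
  apply/seteqP; split => I /=.
    move=> [H aI] f fI; have := H f fI; rewrite inE => /orP[/eqP fa|//].
    by move: aI; rewrite -fa fI.
  move=> H; split; first by move=> f /H; rewrite inE => ->; rewrite orbT.
  by apply/negP => /H; rewrite (negPf abs).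
set X := esum _ _.
have X0 : (0 <= X)%E by apply: esum_ge0 => *; exact: wE_ge0.
by rewrite EFinD ge0_muleDl ?lee_fin ?mul1e // addeC.
Qed.

Lemma Ws_prod bs : uniq bs ->
  (\esum_(I in Ws bs) wE I = (\prod_(b <- bs) (1 + r b))%:E)%E.
Proof.
elim: bs => [|a bs IH] /=; first by rewrite Ws_nil big_nil.
by move=> /andP[abs ubs]; rewrite Ws_cons // IH // big_cons -EFinM.
Qed.

Lemma cover_seq (Js : seq (inst s)) :
  exists bs : seq (fact s), uniq bs /\ forall J f, J \in Js -> f \in J -> f \in bs.
Proof.
elim: Js => [|J Js [bs [ubs Hbs]]]; first by exists [::].
exists (undup (enum_fset J ++ bs)); split; first exact: undup_uniq.
move=> J' f; rewrite inE => /orP[/eqP ->|J'Js] fJ; rewrite mem_undup mem_cat.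
  by rewrite fJ.
by rewrite (Hbs J') ?orbT.
Qed.

Lemma Z_bound (C : RR) :
  (forall bs, uniq bs -> \prod_(b <- bs) (1 + r b) <= C) ->
  (\esum_(I in setT) wE I <= C%:E)%E.
Proof.
move=> HC; apply: ge_ereal_sup => _ [X [finX _] <-].
have [bs [ubs Hbs]] := cover_seq (fset_set X).
apply: (@le_trans _ _ (\esum_(I in Ws bs) wE I)%E).
  apply: ereal_sup_ubound; exists X => //; split => // I XI f fI.
  by apply: (Hbs I) => //; rewrite in_fset_set // inE.
by rewrite (Ws_prod ubs) lee_fin HC.
Qed.

Lemma esum_ge1 (T : choiceType) (S : set T) (f : T -> \bar RR) x :
  S x -> (0 <= f x)%E -> (f x <= \esum_(i in S) f i)%E.
Proof.
move=> Sx f0; apply: esum_ge; exists [set x]; last by rewrite fsbig_set1.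
by split; [exact: finite_set1|move=> y /= ->].
Qed.

Lemma esum_restr (T : choiceType) (A S : set T) (f : T -> \bar RR) :
  (forall x, ~ S x -> f x = 0%E) ->
  (\esum_(i in A `&` S) f i = \esum_(i in A) f i)%E.
Proof.
move=> H; rewrite esum_mkcondr; apply: eq_esum => i _.
case: ifPn => // /negP iS; rewrite H //; move=> Si; apply: iS; exact: mem_set.
Qed.

End TIcons.

Section TIpdb.
Variable s : schema.
Variable r : fact s -> RR.
Hypothesis r_ge0 : forall f, 0 <= r f.
Variable C : RR.
Hypothesis HC : forall bs, uniq bs -> \prod_(b <- bs) (1 + r b) <= C.

Let Z := (\esum_(I in setT) wE r I)%E.

Lemma Z_ge1 : (1 <= Z)%E.
Proof.
have := @esum_ge1 _ setT (wE r) fset0 I (wE_ge0 r_ge0 _).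
by rewrite /wE w_fset0.
Qed.

Lemma Z_fin : Z \is a fin_num.
Proof.
rewrite ge0_fin_numE; last exact: le_trans Z_ge1.
by apply: (le_lt_trans (Z_bound r_ge0 HC)); exact: ltry.
Qed.

Definition Zr := fine Z.

Lemma ZrE : Zr%:E = Z.
Proof. exact: fineK Z_fin. Qed.

Lemma Zr_gt0 : 0 < Zr.
Proof. by rewrite -lte_fin ZrE; apply: lt_le_trans Z_ge1. Qed.

Definition tmass (I : inst s) : RR := w r I / Zr.
Definition tspace : set (inst s) := [set I | 0 < w r I].

Lemma tspace_ne : tspace !=set0.
Proof. by exists fset0; rewrite /tspace /= w_fset0. Qed.

Lemma tmass_ge0 I : 0 <= tmass I.
Proof. by rewrite /tmass divr_ge0 ?w_ge0 // ltW // Zr_gt0. Qed.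

Lemma w_out I : ~ tspace I -> w r I = 0.
Proof.
rewrite /tspace /= => H; have := w_ge0 r_ge0 I; rewrite le0r => /orP[/eqP //|H'].
by exfalso; apply: H.
Qed.

Lemma tmass_out I : ~ tspace I -> tmass I = 0.
Proof. by move=> /w_out; rewrite /tmass => ->; rewrite mul0r. Qed.

Lemma tProbE (A : set (inst s)) :
  (\esum_(I in A `&` tspace) (tmass I)%:E = (Zr^-1)%:E * \esum_(I in A) wE r I)%E.
Proof.
rewrite esum_restr; last by move=> I /tmass_out ->.
rewrite -esumZl ?invr_ge0 ?ltW ?Zr_gt0 //; last by move=> *; exact: wE_ge0.
by apply: eq_esum => I _; rewrite /tmass /wE -EFinM mulrC.
Qed.

Lemma tmass_sum : (\esum_(I in tspace) (tmass I)%:E = 1)%E.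
Proof.
rewrite -(setTI tspace) tProbE -/Z -ZrE -EFinM mulVf //.
by rewrite gt_eqF // Zr_gt0.
Qed.

Definition tipdb : pdb s := PDB tspace_ne tmass_ge0 tmass_out tmass_sum.

Lemma tipdb_Prob (A : set (inst s)) :
  Prob tipdb A = ((Zr^-1)%:E * \esum_(I in A) wE r I)%E.
Proof. exact: tProbE. Qed.

Lemma tipdb_TI : tuple_independent tipdb.
Proof.
move=> fs ufs; rewrite tipdb_Prob.
have -> : [set I | forall f, f \in fs -> f \in I] = Gs fs by [].
rewrite Gs_prod // -/Z -ZrE.
transitivity ((\prod_(f <- fs) (r f / (1 + r f)))%:E)%E.
  by rewrite muleCA -EFinM mulVf ?mulr1 // gt_eqF // Zr_gt0.
rewrite -prodEFin; apply: eq_bigr => f _.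
rewrite tipdb_Prob.
have -> : [set I | f \in I] = Gs [:: f].
  by apply/seteqP; split => I /=; [move=> fI g; rewrite inE => /eqP ->|apply; rewrite inE].
by rewrite Gs_prod // -/Z -ZrE big_seq1 muleCA -EFinM mulVf ?mulr1 // gt_eqF // Zr_gt0.
Qed.

End TIpdb.

Section Image.
Variables (s t : schema) (P : pdb s) (V : view s t).
Hypothesis Hex : forall I, Defs.space P I -> exists D', view_eval V I D'.

Lemma view_eval_uniq I D1 D2 : view_eval V I D1 -> view_eval V I D2 -> D1 = D2.
Proof.
move=> H1 H2; apply/fsetP => f; apply/idP/idP => Hf.
  by apply/H2; apply/H1.
by apply/H1; apply/H2.
Qed.

Lemma Prob_ge0 A : (0 <= Prob P A)%E.
Proof. by apply: esum_ge0 => D _; rewrite lee_fin mass_ge0. Qed.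

Lemma Prob_le1 A : (Prob P A <= 1)%E.
Proof.
rewrite -(mass_sum P) /Prob esum_mkcond [leRHS]esum_mkcond.
apply: le_esum => D _; rewrite in_setI.
case: (D \in A) => /=; case: (D \in Defs.space P) => //=.
by rewrite lee_fin mass_ge0.
Qed.

Lemma Prob_fin A : Prob P A \is a fin_num.
Proof.
rewrite ge0_fin_numE ?Prob_ge0 //; apply: (le_lt_trans (Prob_le1 A)); exact: ltry.
Qed.

Definition qspace : set (inst t) := [set D' | exists2 I, Defs.space P I & view_eval V I D'].
Definition qmass (D' : inst t) : RR := fine (Prob P [set I | view_eval V I D']).

Lemma qspace_ne : qspace !=set0.
Proof.
have [I SI] := space_nonempty P; have [D' HD'] := Hex SI.
by exists D', I.
Qed.

Lemma qmass_ge0 D' : 0 <= qmass D'.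
Proof. exact/fine_ge0/Prob_ge0. Qed.

Lemma Prob_out D' : ~ qspace D' -> Prob P [set I | view_eval V I D'] = 0%E.
Proof.
move=> H; rewrite /Prob.
have -> : [set I | view_eval V I D'] `&` Defs.space P = set0.
  by apply/seteqP; split => I //= [HI SI]; apply: H; exists I.
exact: esum_set0.
Qed.

Lemma qmass_out D' : ~ qspace D' -> qmass D' = 0.
Proof. by move=> /Prob_out; rewrite /qmass => ->. Qed.

Definition outv (I : inst s) : inst t := xget fset0 [set D' | view_eval V I D'].

Lemma outvP I : Defs.space P I -> view_eval V I (outv I).
Proof. by move=> /Hex H; apply: (xgetPex fset0 H). Qed.

Lemma qmass_sum : (\esum_(D' in qspace) (qmass D')%:E = 1)%E.
Proof.
transitivity (\esum_(D' in qspace)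
    \esum_(I in [set I | view_eval V I D'] `&` Defs.space P) (mass P I)%:E)%E.
  by apply: eq_esum => D' _; rewrite /qmass fineK ?Prob_fin.
rewrite esum_esum; last by move=> *; rewrite lee_fin mass_ge0.
rewrite (reindex_esum (Defs.space P) _ (fun I => (outv I, I))); first exact: (mass_sum P).
split.
- by move=> I SI /=; split => /=; [exists I => //; exact: outvP|split => //; exact: outvP].
- by move=> I J _ _ [].
- move=> [D' I] [/= _ [HI SI]]; exists I => //=.
  by congr (_, _); apply: (view_eval_uniq (outvP SI) HI).
Qed.

Definition imgpdb : pdb t := PDB qspace_ne qmass_ge0 qmass_out qmass_sum.

Lemma imgpdb_image : is_image P V imgpdb.
Proof.
split => // D'; rewrite /Prob /=.
case: (pselect (qspace D')) => HD.
  have -> : [set D'] `&` qspace = [set D'] by apply/seteqP; split => x /=; [case|move=> ->].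
  by rewrite esum_set1 ?lee_fin ?qmass_ge0 // /qmass fineK ?Prob_fin.
have -> : [set D'] `&` qspace = set0 by apply/seteqP; split => x //= [-> ].
by rewrite esum_set0; have := Prob_out HD; rewrite /Prob => ->.
Qed.

End Image.

From mathcomp Require Import zify lra.
Local Close Scope ring_scope.
Local Open Scope nat_scope.

Section SatE.
Variables (s : schema) (I : inst s) (dom : set U) (nu : nat -> U).
Lemma sat_Imp (p q : formula s) : sat I dom nu (FImp p q) <-> (sat I dom nu p -> sat I dom nu q).
Proof. by []. Qed.
Lemma sat_And (p q : formula s) : sat I dom nu (FAnd p q) <-> (sat I dom nu p /\ sat I dom nu q).
Proof. by []. Qed.
Lemma sat_Or (p q : formula s) : sat I dom nu (FOr p q) <-> (sat I dom nu p \/ sat I dom nu q).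
Proof. by []. Qed.
Lemma sat_Not (p : formula s) : sat I dom nu (FNot p) <-> ~ sat I dom nu p.
Proof. by []. Qed.
Lemma sat_Ex x (p : formula s) : sat I dom nu (FExists x p) <-> exists2 u, dom u & sat I dom (upd nu x u) p.
Proof. by []. Qed.
Lemma sat_All x (p : formula s) : sat I dom nu (FForall x p) <-> forall u, dom u -> sat I dom (upd nu x u) p.
Proof. by []. Qed.
Lemma sat_Eq t1 t2 : sat I dom nu (FEq s t1 t2) <-> teval nu t1 = teval nu t2.
Proof. by []. Qed.
End SatE.

Fixpoint exs (s : schema) (xs : seq nat) (phi : formula s) : formula s :=
  if xs is x :: xs' then FExists x (exs xs' phi) else phi.
Fixpoint alls (s : schema) (xs : seq nat) (phi : formula s) : formula s :=
  if xs is x :: xs' then FForall x (alls xs' phi) else phi.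
Fixpoint updl (nu : nat -> U) (xs ws : seq nat) : nat -> U :=
  match xs, ws with
  | x :: xs', w :: ws' => updl (upd nu x w) xs' ws'
  | _, _ => nu
  end.

Lemma sat_exs (s : schema) (I : inst s) dom nu xs phi :
  sat I dom nu (exs xs phi) <->
  exists ws, [/\ size ws = size xs, (forall w, w \in ws -> dom w) &
                 sat I dom (updl nu xs ws) phi].
Proof.
elim: xs nu => [|x xs IH] nu /=.
  split; first by move=> H; exists [::].
  by move=> [ws [sz _]]; case: ws sz.
split.
  move=> [u du /IH [ws [sz dws H]]]; exists (u :: ws); split => //=; first by rewrite sz.
  by move=> w; rewrite inE => /orP[/eqP ->|/dws].
move=> [[|u ws] [//= [sz] dws H]]; exists u; first by apply: dws; rewrite inE eqxx.
by apply/IH; exists ws; split => // w wws; apply: dws; rewrite inE wws orbT.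
Qed.

Lemma sat_alls (s : schema) (I : inst s) dom nu xs phi :
  sat I dom nu (alls xs phi) <->
  (forall ws, size ws = size xs -> (forall w, w \in ws -> dom w) ->
              sat I dom (updl nu xs ws) phi).
Proof.
elim: xs nu => [|x xs IH] nu /=.
  by split; [move=> H ws|move=> H; apply: (H [::])].
split.
  move=> H [//|u ws] /= [sz] dws; have /IH := H u (dws u (mem_head _ _)).
  by apply => // w wws; apply: dws; rewrite inE wws orbT.
move=> H u du; apply/IH => ws sz dws; apply: (H (u :: ws)); first by rewrite /= sz.
by move=> w; rewrite inE => /orP[/eqP ->|/dws].
Qed.

Lemma updl_iota nu b n ws v : size ws = n ->
  updl nu (iota b n) ws v = if (b <= v < b + n)%N then nth 0%N ws (v - b) else nu v.
Proof.
elim: n b nu ws => [|n IH] b nu ws.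
  by case: ws => // _ /=; case: ifP => //; lia.
case: ws => [//|w ws] /= [sz]; rewrite IH //; rewrite /upd.
case: (ltngtP v b) => Hvb //=.
  rewrite (_ : (v < b.+1 + n)%N = (v < b + n.+1)%N); last by rewrite addSnnS.
  case: ifP => // _.
  by have -> : (v - b = (v - b.+1).+1)%N by lia.
by subst v; rewrite subnn addnS ltnS leq_addr.
Qed.

Lemma updl_out nu b n ws v : size ws = n -> (v < b \/ b + n <= v)%N ->
  updl nu (iota b n) ws v = nu v.
Proof. by move=> sz H; rewrite updl_iota // ifF //; lia. Qed.

Lemma map_updl nu b n ws : size ws = n -> map (updl nu (iota b n) ws) (iota b n) = ws.
Proof.
move=> sz; rewrite -[RHS](mkseq_nth 0%N) sz /mkseq.
rewrite [X in map _ X = _](_ : iota b n = map (addn b) (iota 0 n)); last by rewrite -iotaDl addn0.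
rewrite -map_comp.
by apply/eq_in_map => i; rewrite mem_iota => /andP[_ Hi] /=; rewrite updl_iota // ifT ?addKn //; lia.
Qed.

Lemma map_teval_TVar nu xs : map (teval nu) (map TVar xs) = map nu xs.
Proof. by rewrite -map_comp. Qed.

Lemma map_teval_TCst nu n c : map (teval nu) (nseq n (TCst c)) = nseq n c.
Proof. by elim: n => //= n ->. Qed.

Lemma ffree_exs (s : schema) xs (phi : formula s) v :
  v \in ffree (exs xs phi) -> v \in ffree phi /\ v \notin xs.
Proof.
elim: xs => [|x xs IH] //=; rewrite mem_filter => /andP[vx /IH [H1 H2]].
by split => //; rewrite inE negb_or vx.
Qed.

Lemma ffree_alls (s : schema) xs (phi : formula s) v :
  v \in ffree (alls xs phi) -> v \in ffree phi /\ v \notin xs.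
Proof.
elim: xs => [|x xs IH] //=; rewrite mem_filter => /andP[vx /IH [H1 H2]].
by split => //; rewrite inE negb_or vx.
Qed.

Lemma flatten_TVar xs : flatten (map term_vars (map TVar xs)) = xs.
Proof. by elim: xs => //= x xs ->. Qed.

Lemma flatten_TCst n c : flatten (map term_vars (nseq n (TCst c))) = [::].
Proof. by elim: n. Qed.

Lemma fcsts_TVar xs : flatten (map term_csts (map TVar xs)) = [::].
Proof. by elim: xs. Qed.

Section Construction.
Variable t : schema.
Variable DD : set (inst t).
Variable D0 : inst t.
Hypothesis HD0 : DD D0.

Definition M := (\max_(R : sym t) ar R)%N.
Definition A := (M + 4)%N.
Definition B := M.

Lemma ar_le_M (R : sym t) : (ar R <= M)%N.
Proof. exact: (@leq_bigmax _ (@ar t) R). Qed.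

Lemma card_unit_pos : (0 < #|{: unit}|)%N.
Proof. by rewrite card_unit. Qed.

Definition s : schema := @Schema unit (fun _ => A) card_unit_pos.

Definition mkf (l : seq nat) : fact s :=
  existT (fun R : sym s => (ar R).-tuple U) tt (insubd (nseq_tuple A 0%N) l).

Lemma mkfK l : size l = A -> (tagged (mkf l) : seq U) = l.
Proof. by move=> sz; rewrite /= val_insubd sz eqxx. Qed.

Lemma mkf_eta (f : fact s) : f = mkf (tagged f).
Proof.
case: f => [[] x]; rewrite /mkf; congr existT.
by apply: val_inj; rewrite val_insubd size_tuple eqxx.
Qed.

Lemma mkf_inj l1 l2 : size l1 = A -> size l2 = A -> mkf l1 = mkf l2 -> l1 = l2.
Proof. by move=> s1 s2 /(congr1 (fun f : fact s => (tagged f : seq U))); rewrite !mkfK. Qed.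

Lemma adom_mkf (I : inst s) l u : size l = A -> mkf l \in I -> u \in l -> adom I u.
Proof. by move=> sz fI ul; exists (mkf l) => //; rewrite mkfK. Qed.

Definition NodeF (ts : seq term) : formula s :=
  @FRel s (tt : sym s) (insubd (nseq_tuple A (TCst 0)) ts).
Arguments NodeF ts : simpl never.

Lemma sat_Node (I : inst s) dom nu ts : size ts = A ->
  sat I dom nu (NodeF ts) <-> mkf (map (teval nu) ts) \in I.
Proof.
move=> sz; rewrite /NodeF /=.
set f := Tagged _ _.
have -> : f = mkf (map (teval nu) ts).
  by rewrite [LHS]mkf_eta; congr mkf; rewrite /f /= val_insubd sz eqxx.
by [].
Qed.

Lemma ffree_Node ts : size ts = A -> ffree (NodeF ts) = flatten (map term_vars ts).
Proof. by move=> sz /=; rewrite val_insubd sz eqxx. Qed.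


Definition codeF (f : fact t) : nat :=
  choice.pickle ((enum_rank (tag f) : nat), (tagged f : seq nat)).

Lemma fact_eqP (f : fact t) R (x : (ar R).-tuple U) :
  tag f = R -> (tagged f : seq U) = x -> f = Tagged (fun R0 : sym t => (ar R0).-tuple U) x.
Proof.
case: f => R' x' /= eR; subst R' => ex; congr existT; exact: val_inj.
Qed.

Lemma codeF_inj : injective codeF.
Proof.
move=> f g /(pcan_inj (@choice.pickleK _)) [] /val_inj /enum_rank_inj eR ex.
case: g eR ex => R x /= eR ex; exact: fact_eqP.
Qed.

Definition codeI (D : inst t) : nat := choice.pickle (map codeF (enum_fset D)).

Lemma codeI_inj : injective codeI.
Proof.
move=> D1 D2 /(pcan_inj (@choice.pickleK _)) /(inj_map codeF_inj) H.
exact: val_inj.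
Qed.

Definition A1 := (M + 3)%N.
Definition A2 := (M + 2)%N.

Definition tagn (R : sym t) : nat := (enum_rank R).+1.
Definition pad (l : seq nat) := l ++ nseq (M - size l) 0%N.
Definition enc (f : fact t) : seq nat := tagn (tag f) :: pad (tagged f).
Definition Lf (D : inst t) : seq (fact t) := enum_fset D.
Definition mD D := size (Lf D).
Definition encs D := map enc (Lf D).
Definition cD D := codeI D.
Definition succ D j := if (j < mD D)%N then (cD D + j.+1)%N else cD D.
Definition nodel D j : seq nat :=
  cD D :: (cD D + j)%N :: succ D j ::
  (if j is j'.+1 then nth [::] (encs D) j' else nseq M.+1 0%N).
Definition node D j := mkf (nodel D j).
Definition blockfact (f : fact s) :=
  exists D j, [/\ DD D, (j <= mD D)%N & f = node D j].
Definition block D : inst s := [fset node D j | j in iota 0 (mD D).+1]%fset.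

Lemma size_pad l : (size l <= M)%N -> size (pad l) = M.
Proof. by move=> H; rewrite /pad size_cat size_nseq; lia. Qed.

Lemma size_enc f : size (enc f) = M.+1.
Proof. by rewrite /= size_pad // size_tuple ar_le_M. Qed.

Lemma encs_nth D j : (j < mD D)%N -> exists f, f \in D /\ nth [::] (encs D) j = enc f.
Proof.
move=> jm; have : nth [::] (encs D) j \in encs D by rewrite mem_nth // size_map.
by move=> /mapP [f fL ->]; exists f.
Qed.

Lemma encs_index D f : f \in D ->
  [/\ (index f (Lf D) < mD D)%N & nth [::] (encs D) (index f (Lf D)) = enc f].
Proof.
move=> fD; have fL : f \in Lf D by [].
split; first by rewrite index_mem.
by rewrite (nth_map f) ?index_mem // nth_index.
Qed.

Lemma size_nodel D j : (j <= mD D)%N -> size (nodel D j) = A.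
Proof.
case: j => [|j] /= H; first by rewrite size_nseq /A; lia.
have [f [_ ->]] := encs_nth H.
by rewrite size_enc /A; lia.
Qed.

Definition Head (cv b : nat) : formula s :=
  exs (iota b A2) (NodeF (TVar cv :: TVar cv :: map TVar (iota b A2))).
Definition Clos (cv b : nat) : formula s :=
  alls (iota b A1) (FImp (NodeF (TVar cv :: map TVar (iota b A1)))
    (exs (iota (b + A) A2) (NodeF (TVar cv :: TVar b.+1 :: map TVar (iota (b + A) A2))))).
Definition Valid cv b := FAnd (Head cv b) (Clos cv b).

Definition validP (I : inst s) (c : nat) :=
  (exists ws, size ws = A2 /\ mkf (c :: c :: ws) \in I) /\
  (forall ws, size ws = A1 -> mkf (c :: ws) \in I ->
     exists ws', size ws' = A2 /\ mkf (c :: nth 0%N ws 1 :: ws') \in I).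

Lemma sat_Head (I : inst s) dom nu cv b : (cv < b)%N -> (forall u, adom I u -> dom u) ->
  sat I dom nu (Head cv b) <-> (exists ws, size ws = A2 /\ mkf (nu cv :: nu cv :: ws) \in I).
Proof.
move=> cvb Hd; rewrite /Head sat_exs size_iota.
have szE : size [:: TVar cv, TVar cv & map TVar (iota b A2)] = A.
  by rewrite /= size_map size_iota /A /A2; lia.
have evE ws : size ws = A2 ->
    map (teval (updl nu (iota b A2) ws)) [:: TVar cv, TVar cv & map TVar (iota b A2)] =
    [:: nu cv, nu cv & ws].
  move=> sz; rewrite /= map_teval_TVar map_updl //.
  by rewrite (updl_iota _ _ _ sz) ifF //; lia.
split.
  move=> [ws [sz dws]]; rewrite (sat_Node _ _ _ szE) (evE ws sz) => H.
  by exists ws.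
move=> [ws [sz H]]; exists ws; split => //.
  by move=> w wws; apply: Hd; apply: (adom_mkf (l := [:: nu cv, nu cv & ws])) => //=;
     [rewrite sz /A /A2; lia|rewrite !inE wws !orbT].
by rewrite (sat_Node _ _ _ szE) (evE ws sz).
Qed.

Lemma sat_Clos (I : inst s) dom nu cv b : (cv < b)%N -> (forall u, adom I u -> dom u) ->
  sat I dom nu (Clos cv b) <->
  (forall ws, size ws = A1 -> mkf (nu cv :: ws) \in I ->
     exists ws', size ws' = A2 /\ mkf (nu cv :: nth 0%N ws 1 :: ws') \in I).
Proof.
move=> cvb Hd; rewrite /Clos sat_alls size_iota.
have sz1 : size (TVar cv :: map TVar (iota b A1)) = A by rewrite /= size_map size_iota /A /A1; lia.
have sz2 : size [:: TVar cv, TVar b.+1 & map TVar (iota (b + A) A2)] = A.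
  by rewrite /= size_map size_iota /A /A2; lia.
have ev1 ws : size ws = A1 ->
    map (teval (updl nu (iota b A1) ws)) (TVar cv :: map TVar (iota b A1)) = nu cv :: ws.
  move=> sz; rewrite /= map_teval_TVar map_updl //.
  by rewrite (updl_iota _ _ _ sz) ifF //; lia.
have ev2 ws ws' : size ws = A1 -> size ws' = A2 ->
    map (teval (updl (updl nu (iota b A1) ws) (iota (b + A) A2) ws'))
        [:: TVar cv, TVar b.+1 & map TVar (iota (b + A) A2)] = [:: nu cv, nth 0%N ws 1 & ws'].
  move=> sz sz'; rewrite /= map_teval_TVar map_updl //.
  have e1 : updl (updl nu (iota b A1) ws) (iota (b + A) A2) ws' cv = nu cv.
    rewrite (updl_iota _ _ _ sz') ifF; last by rewrite /A; lia.
    by rewrite (updl_iota _ _ _ sz) ifF //; lia.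
  have e2 : updl (updl nu (iota b A1) ws) (iota (b + A) A2) ws' b.+1 = nth 0%N ws 1.
    rewrite (updl_iota _ _ _ sz') ifF; last by rewrite /A; lia.
    by rewrite (updl_iota _ _ _ sz) ifT ?subSnn //; rewrite /A1; lia.
  by rewrite e1 e2.
split.
  move=> H ws sz fI.
  have dws : forall w, w \in ws -> dom w.
    move=> w wws; apply: Hd; apply: (adom_mkf (l := nu cv :: ws)) => //=.
      by rewrite sz /A /A1; lia.
    by rewrite inE wws orbT.
  have := H ws sz dws; rewrite sat_Imp (sat_Node _ _ _ sz1) (ev1 _ sz) => /(_ fI).
  rewrite sat_exs size_iota => -[ws' [sz' _]]; rewrite (sat_Node _ _ _ sz2) (ev2 _ _ sz sz') => H'.
  by exists ws'.
move=> H ws sz dws; rewrite sat_Imp (sat_Node _ _ _ sz1) (ev1 _ sz) => /(H _ sz) [ws' [sz' H']].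
rewrite sat_exs size_iota; exists ws'; split => //.
  move=> w wws; apply: Hd; apply: (adom_mkf (l := [:: nu cv, nth 0%N ws 1 & ws'])) => //=.
    by rewrite sz' /A /A2; lia.
  by rewrite !inE wws !orbT.
by rewrite (sat_Node _ _ _ sz2) (ev2 _ _ sz sz').
Qed.

Lemma sat_Valid (I : inst s) dom nu cv b : (cv < b)%N -> (forall u, adom I u -> dom u) ->
  sat I dom nu (Valid cv b) <-> validP I (nu cv).
Proof.
move=> cvb Hd; rewrite /Valid /validP sat_And.
by rewrite (sat_Head nu cvb Hd) (sat_Clos nu cvb Hd).
Qed.



Definition Uniq : formula s :=
  FAnd (Valid B (B + 2)) (FForall B.+1 (FImp (Valid B.+1 (B + 2)) (FEq s (TVar B.+1) (TVar B)))).

Definition uniqP (I : inst s) c := validP I c /\ forall c', validP I c' -> c' = c.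

Lemma validP_adom I c : validP I c -> adom I c.
Proof.
move=> [[ws [sz H]] _]; apply: (adom_mkf (l := [:: c, c & ws])) => //=.
  by rewrite sz /A /A2; lia.
by rewrite inE eqxx.
Qed.

Lemma sat_Uniq (I : inst s) dom nu : (forall u, adom I u -> dom u) ->
  sat I dom nu Uniq <-> uniqP I (nu B).
Proof.
move=> Hd; rewrite /Uniq sat_And sat_Valid //; last by lia.
rewrite sat_All /uniqP; split => -[H1 H2]; split => // c'.
  move=> Hc'; have := H2 c' (Hd _ (validP_adom Hc')).
  rewrite sat_Imp sat_Valid //; last by lia.
  rewrite sat_Eq /upd /= eqxx ifF; last by apply/eqP; lia.
  by move/(_ Hc').
move=> _; rewrite sat_Imp sat_Valid //; last by lia.
rewrite sat_Eq /upd /= eqxx ifF; last by apply/eqP; lia.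
exact: H2.
Qed.

Definition DataF (R : sym t) : formula s :=
  exs (iota (B + 2) 2) (NodeF (TVar B :: TVar (B + 2) :: TVar (B + 3) :: TCst (tagn R) ::
       (map TVar (iota 0 (ar R)) ++ nseq (M - ar R) (TCst 0)))).

Definition dataP (I : inst s) c R (x : seq nat) :=
  exists e y, mkf (c :: e :: y :: tagn R :: pad x) \in I.

Lemma sat_Data (I : inst s) dom nu R : (forall u, adom I u -> dom u) ->
  sat I dom nu (DataF R) <-> dataP I (nu B) R (map nu (iota 0 (ar R))).
Proof.
move=> Hd; rewrite /DataF sat_exs size_iota.
have sz : size (TVar B :: TVar (B + 2) :: TVar (B + 3) :: TCst (tagn R) ::
       (map TVar (iota 0 (ar R)) ++ nseq (M - ar R) (TCst 0))) = A.
  by rewrite /= size_cat size_map size_iota size_nseq /A; have := ar_le_M R; lia.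
have ev e y : map (teval (updl nu (iota (B + 2) 2) [:: e; y]))
   (TVar B :: TVar (B + 2) :: TVar (B + 3) :: TCst (tagn R) ::
       (map TVar (iota 0 (ar R)) ++ nseq (M - ar R) (TCst 0))) =
   nu B :: e :: y :: tagn R :: pad (map nu (iota 0 (ar R))).
  rewrite /= map_cat map_teval_TVar map_teval_TCst /pad size_map size_iota /upd.
  have HR := ar_le_M R.
  rewrite ifF; last by apply/eqP; rewrite /B; lia.
  rewrite ifF; last by apply/eqP; rewrite /B; lia.
  rewrite ifF; last by apply/eqP; rewrite /B; lia.
  rewrite eqxx.
  rewrite ifT; last by apply/eqP; rewrite /B; lia.
  congr [:: _, _, _, _ & _ ++ _]; apply/eq_in_map => i; rewrite mem_iota => /andP[_ Hi].
  rewrite ifF; last by apply/eqP; rewrite /B; lia.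
  by rewrite ifF //; apply/eqP; rewrite /B; lia.
split.
  move=> [ws [szw _]]; case: ws szw => [|e [|y [|//]]] // _.
  rewrite (sat_Node _ _ _ sz) ev => H.
  by exists e, y.
move=> [e [y H]]; exists [:: e; y]; split => //.
  have szl : size (nu B :: e :: y :: tagn R :: pad (map nu (iota 0 (ar R)))) = A.
    by rewrite /= size_pad ?size_map ?size_iota ?ar_le_M // /A; lia.
  move=> w wws; apply: Hd; apply: (adom_mkf szl H).
  by move: wws; rewrite !inE => /orP[/eqP ->|/eqP ->]; rewrite eqxx ?orbT.
by rewrite (sat_Node _ _ _ sz) ev.
Qed.



Definition eqF (k : nat) (a : seq nat) : formula s :=
  foldr (@FAnd s) (@FTrue s) [seq FEq s (TVar i) (TCst (nth 0 a i)) | i <- iota 0 k].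

Definition ConstF (R : sym t) : formula s :=
  foldr (@FOr s) (@FFalse s)
    [seq eqF (ar R) (tval (tagged f)) | f <- [seq f <- Lf D0 | tag f == R]].

Definition Phi (R : sym t) : formula s :=
  FOr (FExists B (FAnd Uniq (DataF R))) (FAnd (FNot (FExists B Uniq)) (ConstF R)).

Lemma sat_foldrAnd (X : eqType) (I : inst s) dom nu (l : seq X) (g : X -> formula s) :
  sat I dom nu (foldr (@FAnd s) (@FTrue s) (map g l)) <-> (forall x, x \in l -> sat I dom nu (g x)).
Proof.
elim: l => [|x l IH] //=; rewrite IH; split.
  by move=> [H1 H2] y; rewrite inE => /orP[/eqP ->|/H2].
by move=> H; split; [apply: H; rewrite inE eqxx|move=> y yl; apply: H; rewrite inE yl orbT].
Qed.

Lemma sat_foldrOr (X : eqType) (I : inst s) dom nu (l : seq X) (g : X -> formula s) :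
  sat I dom nu (foldr (@FOr s) (@FFalse s) (map g l)) <-> (exists2 x, x \in l & sat I dom nu (g x)).
Proof.
elim: l => [|x l IH] /=; first by split => // -[].
rewrite IH; split.
  by move=> [H|[y yl H]]; [exists x; rewrite ?inE ?eqxx|exists y; rewrite ?inE ?yl ?orbT].
move=> [y]; rewrite inE => /orP[/eqP ->|yl] H; [left|right; exists y] => //.
Qed.

Lemma sat_eqF (I : inst s) dom nu k a :
  sat I dom nu (eqF k a) <-> forall i, i < k -> nu i = nth 0 a i.
Proof.
rewrite /eqF (sat_foldrAnd _ _ _ _ (fun i => FEq s (TVar i) (TCst (nth 0 a i)))).
by split => H i; [move=> ik; apply: H; rewrite mem_iota|rewrite mem_iota => /andP[_ ik]; apply: H].
Qed.

Lemma sat_Const (I : inst s) dom nu R :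
  sat I dom nu (ConstF R) <->
  exists2 f, f \in D0 & tag f = R /\ forall i, i < ar R -> nu i = nth 0 (tagged f) i.
Proof.
rewrite /ConstF (sat_foldrOr _ _ _ _ (fun f => eqF (ar R) (tval (tagged f)))).
split => -[f].
  by rewrite mem_filter => /andP[/eqP tf fD] /sat_eqF H; exists f.
move=> fD [tf H]; exists f; first by rewrite mem_filter tf eqxx.
exact/sat_eqF.
Qed.



Lemma map_asg (R : sym t) (x : (ar R).-tuple U) c :
  map (upd (tuple_asg x) B c) (iota 0 (ar R)) = x.
Proof.
rewrite -[RHS](mkseq_nth 0) size_tuple /mkseq; apply/eq_in_map => i.
rewrite mem_iota => /andP[_ Hi]; rewrite /upd ifF //; apply/eqP.
by have := ar_le_M R; rewrite /B; lia.
Qed.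

Lemma uniqP_adom I c : uniqP I c -> adom I c.
Proof. by move=> [/validP_adom]. Qed.

Lemma tagged_size (f : fact t) : size (tagged f : seq U) = ar (tag f).
Proof. exact: size_tuple. Qed.

Lemma sat_Phi (I : inst s) dom (R : sym t) (x : (ar R).-tuple U) :
  (forall u, adom I u -> dom u) ->
  sat I dom (tuple_asg x) (Phi R) <->
  (exists c, uniqP I c /\ dataP I c R x) \/
  (~ (exists c, uniqP I c) /\ Tagged (fun R0 : sym t => (ar R0).-tuple U) x \in D0).
Proof.
move=> Hd; rewrite /Phi sat_Or sat_Ex sat_And sat_Not sat_Ex sat_Const.
have E1 c : sat I dom (upd (tuple_asg x) B c) Uniq <-> uniqP I c.
  by rewrite sat_Uniq // /upd eqxx.
have E2 c : sat I dom (upd (tuple_asg x) B c) (DataF R) <-> dataP I c R x.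
  by rewrite sat_Data // map_asg /upd eqxx.
have E3 : (exists2 c, dom c & sat I dom (upd (tuple_asg x) B c) Uniq) <-> exists c, uniqP I c.
  split; first by move=> [c _ /E1 H]; exists c.
  by move=> [c H]; exists c; [apply: Hd; exact: uniqP_adom|apply/E1].
have E4 : (exists2 f, f \in D0 & tag f = R /\
            forall i, i < ar R -> tuple_asg x i = nth 0 (tagged f : seq U) i) <->
          Tagged (fun R0 : sym t => (ar R0).-tuple U) x \in D0.
  split.
    move=> [f fD [tf H]]; suff <- : f = Tagged (fun R0 : sym t => (ar R0).-tuple U) x by [].
    apply: fact_eqP => //; apply: (@eq_from_nth _ 0).
      by rewrite tagged_size size_tuple tf.
    move=> i; rewrite tagged_size => Hi; rewrite -H //.
    by move: Hi; rewrite tf.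
  by move=> H; exists (Tagged (fun R0 : sym t => (ar R0).-tuple U) x) => //.
rewrite E3 E4; split.
  move=> [[c dc /sat_And [/E1 H1 /E2 H2]]|[H1 H2]]; [left; exists c|right] => //.
move=> [[c [H1 H2]]|[H1 H2]]; [left|right] => //.
exists c; first by apply: Hd; exact: uniqP_adom.
by apply/sat_And; split; [apply/E1|apply/E2].
Qed.



Definition subbf (I : inst s) := forall f, f \in I -> blockfact f.

Lemma bf_node I l : subbf I -> size l = A -> mkf l \in I ->
  exists D j, [/\ DD D, j <= mD D & l = nodel D j].
Proof.
move=> HI sz /HI [D [j [HD Hj E]]]; exists D, j; split => //.
apply: mkf_inj => //; first exact: size_nodel.

Qed.

Lemma nodel_cD D j : head 0 (nodel D j) = cD D. Proof. by []. Qed.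

Lemma chain I c : subbf I -> validP I c ->
  exists D, [/\ DD D, c = cD D & forall j, j <= mD D -> node D j \in I].
Proof.
move=> HI [[ws [sz Hh]] Hc].
have [D [j [HD Hj E]]] := bf_node HI (l := [:: c, c & ws]) ltac:(by rewrite /= sz /A /A2; lia) Hh.
move: (E) => [Ec Ej _]; exists D; split => //.
have j0 : j = 0 by move: Ej; rewrite -Ec; lia.
subst j.
have H0 : node D 0 \in I by rewrite /node -E.
elim=> [//|j IH] Hj'.
have Hj1 : node D j \in I by apply: IH; lia.
have szn : size (behead (nodel D j)) = A1.
  by rewrite size_behead (size_nodel (j:=j)) /A /A1 //; lia.
have := Hc (behead (nodel D j)) szn.
rewrite Ec /= -/(nodel D j) -/(node D j) => /(_ Hj1) [ws' [sz' H']].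
have [D' [j' [HD' Hj'' E']]] :=
  bf_node HI (l := [:: cD D, nth 0 (behead (nodel D j)) 1 & ws']) ltac:(by rewrite /= sz' /A /A2; lia) H'.
move: (E') => [Ec' Ej' _].
have DD' : D' = D by apply: codeI_inj; rewrite -/(cD D) -/(cD D') -Ec'.
subst D'.
move: Ej'; rewrite /= /succ ifT; last by lia.
move=> Ej'; have jj : j' = j.+1 by lia.
by subst j'; rewrite /node -E'.
Qed.



Lemma block_mem D j : j <= mD D -> node D j \in block D.
Proof. by move=> Hj; apply/imfsetP; exists j => //; rewrite mem_iota; lia. Qed.

Lemma block_memP D f : f \in block D -> exists2 j, j <= mD D & f = node D j.
Proof. by move=> /imfsetP [j]; rewrite mem_iota => /andP[_ Hj] ->; exists j => //; lia. Qed.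

Lemma block_subbf D : DD D -> subbf (block D).
Proof. by move=> HD f /block_memP [j Hj ->]; exists D, j. Qed.

Lemma size_drop2 D j : j <= mD D -> size (drop 2 (nodel D j)) = A2.
Proof. by move=> Hj; rewrite size_drop (size_nodel Hj) /A /A2; lia. Qed.

Lemma node_split D j : nodel D j = cD D :: (cD D + j) :: drop 2 (nodel D j).
Proof. by []. Qed.

Lemma block_valid D : validP (block D) (cD D).
Proof.
split.
  exists (drop 2 (nodel D 0)); split; first exact: size_drop2.
  by have := block_mem (D := D) (j := 0) (leq0n _); rewrite /node node_split addn0.
move=> ws sz /block_memP [j Hj E].
have Ews : cD D :: ws = nodel D j.
  apply: mkf_inj => //; [by rewrite /= sz /A /A1; lia|exact: size_nodel].
have -> : nth 0 ws 1 = succ D j by rewrite (_ : ws = behead (nodel D j)) // -Ews.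
rewrite /succ; case: ifP => Hjm.
  exists (drop 2 (nodel D j.+1)); split; first exact: size_drop2.
  by have := block_mem (D := D) (j := j.+1) Hjm; rewrite /node node_split.
exists (drop 2 (nodel D 0)); split; first exact: size_drop2.
by have := block_mem (D := D) (j := 0) (leq0n _); rewrite /node node_split addn0.
Qed.

Lemma block_uniq D c : validP (block D) c -> c = cD D.
Proof.
move=> [[ws [sz /block_memP [j Hj E]]] _].
have : [:: c, c & ws] = nodel D j.
  apply: mkf_inj => //; [by rewrite /= sz /A /A2; lia|exact: size_nodel].
by move=> [].
Qed.

Lemma block_uniqP D : uniqP (block D) (cD D).
Proof. by split; [exact: block_valid|move=> c'; exact: block_uniq]. Qed.

Lemma tagn_inj : injective tagn.
Proof. by move=> R1 R2 [] /val_inj /enum_rank_inj. Qed.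

Lemma pad_inj (x y : seq nat) : size x = size y -> pad x = pad y -> x = y.
Proof.
move=> sz /(congr1 (take (size x))); rewrite /pad take_size_cat // sz take_size_cat //.
Qed.

Lemma data_block I D (R : sym t) (x : (ar R).-tuple U) : subbf I ->
  (forall j, j <= mD D -> node D j \in I) ->
  dataP I (cD D) R x <-> Tagged (fun R0 : sym t => (ar R0).-tuple U) x \in D.
Proof.
move=> HI Hblk; split.
  move=> [e [y H]].
  have sz : size [:: cD D, e, y, tagn R & pad x] = A.
    by rewrite /= size_pad ?size_tuple ?ar_le_M // /A; lia.
  have [D' [j [HD' Hj E]]] := bf_node HI sz H.
  move: (E) => [Ec _ _ Et].
  have DD' : D' = D by apply: codeI_inj; rewrite -/(cD D) -/(cD D') -Ec.
  subst D'.
  case: j Hj E Et => [|k] Hk E Et; first by move: Et => [].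
  have [g [gD Eg]] := encs_nth Hk.
  move: Et; rewrite Eg /enc => -[tg Hx].
  have tg' : tag g = R by apply: enum_rank_inj; apply: val_inj; rewrite /= -tg.
  have Hx' : (tagged g : seq U) = x.
    by apply: pad_inj; [rewrite !size_tuple tg'|rewrite Hx].
  suff -> : Tagged (fun R0 : sym t => (ar R0).-tuple U) x = g by [].
  by symmetry; apply: fact_eqP.
move=> fD; have [Hk Ek] := encs_index fD.
exists (cD D + (index (Tagged (fun R0 : sym t => (ar R0).-tuple U) x) (Lf D)).+1).
exists (succ D (index (Tagged (fun R0 : sym t => (ar R0).-tuple U) x) (Lf D)).+1).
have := Hblk _ Hk; rewrite /node /nodel Ek /enc /=.
by [].
Qed.



Lemma ffree_Imp (p q : formula s) : ffree (FImp p q) = ffree p ++ ffree q. Proof. by []. Qed.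
Lemma ffree_And (p q : formula s) : ffree (FAnd p q) = ffree p ++ ffree q. Proof. by []. Qed.
Lemma ffree_Or (p q : formula s) : ffree (FOr p q) = ffree p ++ ffree q. Proof. by []. Qed.
Lemma ffree_Not (p : formula s) : ffree (FNot p) = ffree p. Proof. by []. Qed.
Lemma ffree_Ex x (p : formula s) : ffree (FExists x p) = [seq y <- ffree p | y != x]. Proof. by []. Qed.
Lemma ffree_All x (p : formula s) : ffree (FForall x p) = [seq y <- ffree p | y != x]. Proof. by []. Qed.

Lemma ffree_Head cv b v : v \in ffree (Head cv b) -> v = cv.
Proof.
move=> /ffree_exs [H1 H2]; move: H1; rewrite ffree_Node; last first.
  by rewrite /= size_map size_iota /A /A2; lia.
rewrite /= flatten_TVar !inE => /orP[/eqP //|/orP[/eqP //|H]].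
by rewrite H in H2.
Qed.

Lemma ffree_Clos cv b v : v \in ffree (Clos cv b) -> v = cv.
Proof.
move=> /ffree_alls [H1 H2]; move: H1; rewrite ffree_Imp mem_cat => /orP[].
  rewrite ffree_Node; last by rewrite /= size_map size_iota /A /A1; lia.
  rewrite /= flatten_TVar inE => /orP[/eqP //|H]; by rewrite H in H2.
move=> /ffree_exs [H3 H4]; move: H3; rewrite ffree_Node; last first.
  by rewrite /= size_map size_iota /A /A2; lia.
rewrite /= flatten_TVar !inE => /orP[/eqP //|/orP[/eqP Hv|H]]; last by rewrite H in H4.
by move: H2; rewrite Hv mem_iota /A1; lia.
Qed.

Lemma ffree_Valid cv b v : v \in ffree (Valid cv b) -> v = cv.
Proof. by rewrite ffree_And mem_cat => /orP[/ffree_Head|/ffree_Clos]. Qed.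

Lemma ffree_Uniq v : v \in ffree Uniq -> v = B.
Proof.
rewrite ffree_And mem_cat => /orP[/ffree_Valid //|]; rewrite ffree_All mem_filter => /andP[vB].
rewrite ffree_Imp mem_cat => /orP[/ffree_Valid Hv|]; first by rewrite Hv eqxx in vB.
by rewrite /= !inE (negPf vB) => /eqP.
Qed.

Lemma ffree_Data (R : sym t) v : v \in ffree (DataF R) -> v = B \/ v < ar R.
Proof.
move=> /ffree_exs [H1 H2]; move: H1; rewrite ffree_Node; last first.
  by rewrite /= size_cat size_map size_iota size_nseq /A; have := ar_le_M R; lia.
rewrite /= map_cat flatten_cat flatten_TVar flatten_TCst cats0 !inE.
move=> /orP[/eqP ->|/orP[/eqP Hv|/orP[/eqP Hv|]]]; first by left.
- by move: H2; rewrite Hv mem_iota; lia.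
- by move: H2; rewrite Hv mem_iota; lia.
by rewrite mem_iota => /andP[_ H]; right.
Qed.

Lemma ffree_foldrOr (X : Type) (l : seq X) (g : X -> formula s) :
  ffree (foldr (@FOr s) (@FFalse s) (map g l)) = flatten (map (fun x => ffree (g x)) l).
Proof. by elim: l => [|x l IH] //=; rewrite IH. Qed.

Lemma ffree_foldrAnd (X : Type) (l : seq X) (g : X -> formula s) :
  ffree (foldr (@FAnd s) (@FTrue s) (map g l)) = flatten (map (fun x => ffree (g x)) l).
Proof. by elim: l => [|x l IH] //=; rewrite IH. Qed.

Lemma ffree_eqF k a v : v \in ffree (eqF k a) -> v < k.
Proof.
rewrite /eqF ffree_foldrAnd => /flatten_mapP [i]; rewrite mem_iota => /andP[_ H].
by rewrite /= inE => /eqP ->.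
Qed.

Lemma ffree_Const (R : sym t) v : v \in ffree (ConstF R) -> v < ar R.
Proof. by rewrite /ConstF ffree_foldrOr => /flatten_mapP [f _ /ffree_eqF]. Qed.

Lemma Phi_free (R : sym t) : all (fun x => x < ar R) (ffree (Phi R)).
Proof.
apply/allP => v; rewrite /Phi ffree_Or ffree_And ffree_Not ffree_Ex ffree_Ex ffree_And !mem_cat.
move=> /orP[|/orP[]].
- rewrite mem_filter => /andP[vB]; rewrite mem_cat => /orP[/ffree_Uniq Hv|/ffree_Data[Hv|//]];
  by rewrite Hv eqxx in vB.
- by rewrite mem_filter => /andP[vB /ffree_Uniq Hv]; rewrite Hv eqxx in vB.
exact: ffree_Const.
Qed.

Definition V : view s t := View Phi_free.

Lemma fcsts_foldrOr (X : Type) (l : seq X) (g : X -> formula s) :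
  fcsts (foldr (@FOr s) (@FFalse s) (map g l)) = flatten (map (fun x => fcsts (g x)) l).
Proof. by elim: l => [|x l IH] //=; rewrite IH. Qed.

Lemma fcsts_foldrAnd (X : Type) (l : seq X) (g : X -> formula s) :
  fcsts (foldr (@FAnd s) (@FTrue s) (map g l)) = flatten (map (fun x => fcsts (g x)) l).
Proof. by elim: l => [|x l IH] //=; rewrite IH. Qed.

Lemma Const_csts (R : sym t) (f : fact t) u :
  f \in D0 -> tag f = R -> u \in (tagged f : seq U) -> u \in fcsts (Phi R).
Proof.
move=> fD tf uf.
have H : u \in fcsts (ConstF R).
  rewrite /ConstF fcsts_foldrOr; apply/flatten_mapP; exists f.
    by rewrite mem_filter tf eqxx.
  rewrite /eqF fcsts_foldrAnd /=.
  have -> : flatten [seq [:: nth 0 (tagged f : seq U) i] | i <- iota 0 (ar R)] =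
            [seq nth 0 (tagged f : seq U) i | i <- iota 0 (ar R)].
    by elim: (iota 0 (ar R)) => //= i l ->.
  have Hs : size (tagged f : seq U) = ar R by rewrite tagged_size tf.
  by rewrite -Hs -/(mkseq _ _) mkseq_nth.
by rewrite /Phi /= !mem_cat H !orbT.
Qed.



Lemma models_Phi I (R : sym t) (x : (ar R).-tuple U) :
  models I (vformula V R) x <->
  (exists c, uniqP I c /\ dataP I c R x) \/
  (~ (exists c, uniqP I c) /\ Tagged (fun R0 : sym t => (ar R0).-tuple U) x \in D0).
Proof. by rewrite /models /=; apply: sat_Phi => u Hu; left. Qed.

Lemma view_block I D : subbf I -> uniqP I (cD D) ->
  (forall j, j <= mD D -> node D j \in I) -> view_eval V I D.
Proof.
move=> HI Hu Hblk [R x] /=; rewrite models_Phi.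
have E : ((exists c, uniqP I c /\ dataP I c R x) \/
  (~ (exists c, uniqP I c) /\ Tagged (fun R0 : sym t => (ar R0).-tuple U) x \in D0)) <->
  dataP I (cD D) R x.
  split; last by move=> H; left; exists (cD D).
  move=> [[c [[Hv _] Hd]]|[H _]]; last by exfalso; apply: H; exists (cD D).
  by have <- := Hu.2 c Hv.
rewrite E (data_block _ HI Hblk); split => [fD|[_ //]]; split => // u ux.
have [e [y H]] := (proj2 (data_block x HI Hblk) fD).
left; apply: (adom_mkf (l := [:: cD D, e, y, tagn R & pad x])) H _.
  by rewrite /= size_pad ?size_tuple ?ar_le_M // /A; lia.
by rewrite !inE /pad mem_cat ux !orbT.
Qed.

Lemma view_default I : subbf I -> ~ (exists c, uniqP I c) -> view_eval V I D0.
Proof.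
move=> HI Hn [R x] /=; rewrite models_Phi.
have E : ((exists c, uniqP I c /\ dataP I c R x) \/
  (~ (exists c, uniqP I c) /\ Tagged (fun R0 : sym t => (ar R0).-tuple U) x \in D0)) <->
  Tagged (fun R0 : sym t => (ar R0).-tuple U) x \in D0.
  split; last by move=> H; right.
  by move=> [[c [Hc _]]|[_ //]]; exfalso; apply: Hn; exists c.
rewrite E; split => [fD|[_ //]]; split => // u ux.
by right; apply: (Const_csts (f := Tagged (fun R0 : sym t => (ar R0).-tuple U) x)).
Qed.

Lemma exists_out I : subbf I -> exists D', DD D' /\ view_eval V I D'.
Proof.
move=> HI; case: (pselect (exists c, uniqP I c)) => [[c Hc]|Hn].
  have [D [HD Ec Hblk]] := chain HI Hc.1.
  exists D; split => //; apply: view_block => //; by rewrite -Ec.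
by exists D0; split => //; exact: view_default.
Qed.



Definition codeS (f : fact s) : nat := choice.pickle (tagged f : seq nat).

Lemma codeS_inj : injective codeS.
Proof.
move=> f g /(pcan_inj (@choice.pickleK _)) E.
by rewrite (mkf_eta f) (mkf_eta g) E.
Qed.

Local Open Scope ring_scope.

Definition hw (k : nat) : RR := (2^-1) ^+ k.+2.

Definition rw (f : fact s) : RR :=
  if pselect (blockfact f) is left _ then hw (codeS f) else 0.

Lemma hw_ge0 k : 0 <= hw k.
Proof. by rewrite /hw exprn_ge0 // invr_ge0. Qed.

Lemma hw_gt0 k : 0 < hw k.
Proof. by rewrite /hw exprn_gt0 // invr_gt0. Qed.

Lemma rw_ge0 f : 0 <= rw f.
Proof. by rewrite /rw; case: pselect => _ //; exact: hw_ge0. Qed.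

Lemma rw_le f : rw f <= hw (codeS f).
Proof. by rewrite /rw; case: pselect => _ //; exact: hw_ge0. Qed.

Lemma rw_gt0 f : blockfact f -> 0 < rw f.
Proof. by move=> H; rewrite /rw; case: pselect => // _; exact: hw_gt0. Qed.

Lemma sum_sub (ks : seq nat) N (a : nat -> RR) : uniq ks -> (forall k, k \in ks -> (k < N)%N) ->
  (forall k, 0 <= a k) -> \sum_(k <- ks) a k <= \sum_(k <- iota 0 N) a k.
Proof.
move=> uks HN a0; rewrite [X in _ <= X](bigID (fun k => k \in ks)) /=.
have Hp : perm_eq [seq k <- iota 0 N | k \in ks] ks.
  apply: uniq_perm; [by rewrite filter_uniq // iota_uniq|by []|].
  move=> k; rewrite mem_filter mem_iota; case kk: (k \in ks) => //=.
  by rewrite add0n HN.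
rewrite -[\sum_(k <- iota 0 N | k \in ks) a k]big_filter (perm_big _ Hp) lerDl.
by rewrite sumr_ge0.
Qed.

Lemma sum_hw N : \sum_(k <- iota 0 N) hw k = 2^-1 - (2^-1) ^+ N.+1.
Proof.
elim: N => [|N IH]; first by rewrite big_nil expr1 subrr.
rewrite -addn1 iotaD big_cat /= big_seq1 IH add0n /hw addn1.
rewrite (exprS _ N.+1).
set x := (2^-1) ^+ N.+1.
have -> : (2:RR)^-1 = 1 / 2 by rewrite div1r.
lra.
Qed.

Lemma sum_le_sumn ks k : k \in ks -> (k <= sumn ks)%N.
Proof.
elim: ks => [//|k' ks IH]; rewrite inE => /orP[/eqP ->|/IH H] /=; lia.
Qed.

Lemma sum_hw_le (ks : seq nat) : uniq ks -> \sum_(k <- ks) hw k <= 2^-1.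
Proof.
move=> uks; apply: (le_trans (sum_sub (N := (sumn ks).+1) uks _ hw_ge0)).
  by move=> k /sum_le_sumn; lia.
rewrite sum_hw lerBlDr lerDl; exact: exprn_ge0.
Qed.

Lemma prod_hw (ks : seq nat) : \sum_(k <- ks) hw k <= 2^-1 ->
  \prod_(k <- ks) (1 + hw k) <= 1 + 2 * \sum_(k <- ks) hw k.
Proof.
elim: ks => [|k ks IH]; first by rewrite !big_nil mulr0 addr0.
rewrite !big_cons => Hs.
have hk := hw_ge0 k.
have Ss : 0 <= \sum_(j <- ks) hw j by apply: sumr_ge0 => j _; exact: hw_ge0.
have Hs' : \sum_(j <- ks) hw j <= 2^-1 by lra.
have := IH Hs'; set S := \sum_(j <- ks) hw j; set P := \prod_(j <- ks) (1 + hw j) => HP.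
apply: (le_trans (ler_wpM2l _ HP)); first lra.
have h2 : (2:RR)^-1 = 1 / 2 by rewrite div1r.
rewrite h2 -/S in Hs'.
have H1 : hw k * (2 * S) <= hw k * 1 by apply: ler_wpM2l => //; lra.
lra.
Qed.

Lemma HC2 bs : uniq bs -> \prod_(b <- bs) (1 + rw b) <= 2.
Proof.
move=> ubs.
apply: (le_trans (y := \prod_(b <- bs) (1 + hw (codeS b)))).
  apply: ler_prod => b _; rewrite lerD2l rw_le andbT.
  by apply: addr_ge0 => //; exact: rw_ge0.
rewrite -(big_map codeS xpredT (fun k => 1 + hw k)).
have uks : uniq (map codeS bs) by rewrite map_inj_uniq //; exact: codeS_inj.
have Hs := sum_hw_le uks.
apply: (le_trans (prod_hw Hs)); lra.
Qed.

Lemma w_subbf I : 0 < w rw I -> subbf I.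
Proof.
move=> Hw f fI; apply: contrapT => Hf.
have : w rw I == 0.
  rewrite /w prodf_seq_eq0; apply/hasP; exists f => //=.
  by rewrite /rw; case: pselect.
by rewrite gt_eqF.
Qed.

Lemma w_block D : DD D -> 0 < w rw (block D).
Proof.
move=> HD; rewrite /w big_seq; apply: prodr_gt0 => f fI.
by apply: rw_gt0; exact: (block_subbf HD fI).
Qed.

End Construction.

Lemma Prob_pos_ex (s0 : schema) (P : pdb s0) (A0 : set (inst s0)) :
  (0 < Prob P A0)%E -> exists I, A0 I /\ Defs.space P I.
Proof.
move=> H; apply: contrapT => Hn; move: H; rewrite /Prob.
have -> : A0 `&` Defs.space P = set0.
  by apply/seteqP; split => I //= [H1 H2]; apply: Hn; exists I.
by rewrite esum_set0 ltxx.
Qed.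

Theorem lemma6p6 (t : schema) (DD : set (inst t)) :
  DD !=set0 -> exists Q : pdb t, in_FO_TI Q /\ worlds Q = DD.
Proof.
move=> [D0 HD0].
pose P := tipdb (rw_ge0 DD) (HC2 DD).
have Hex : forall I, Defs.space P I -> exists D', view_eval (V D0) I D'.
  move=> I SI; have [D' [_ H]] := exists_out HD0 (w_subbf SI).
  by exists D'.
exists (imgpdb Hex); split.
  exists (s t), P, (V D0); split; [exact: tipdb_TI|exact: imgpdb_image].
have [_ HP] := imgpdb_image Hex.
apply/seteqP; split => D'; rewrite /worlds /= HP.
  move=> /Prob_pos_ex [I [HI SI]].
  have [D'' [HD'' H'']] := exists_out HD0 (w_subbf SI).
  by rewrite (view_eval_uniq HI H'').
move=> HD'.
have Hb : ([set I | view_eval (V D0) I D'] `&` Defs.space P) (block D').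
  split; last exact: w_block.
  apply: view_block; [exact: block_subbf|exact: block_uniqP|].
  by move=> j Hj; exact: block_mem.
apply: (lt_le_trans _ (esum_ge1 Hb _)); last by rewrite lee_fin (tmass_ge0 (rw_ge0 DD) (HC2 DD)).
rewrite lte_fin /= /tmass divr_gt0 //; first exact: w_block.
exact: (Zr_gt0 (rw_ge0 DD) (HC2 DD)).
Qed.
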